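(* Let $L\ge1$ and let $X_1,\ldots,X_L$, $Y_1,\ldots,Y_L$ be operators with $X_l,Y_l$ acting on the same space for each $l$, and set $X=\bigotimes_{l=1}^{L}X_{l}$, $Y=\bigotimes_{l=1}^{L}Y_{l}$. Then for each $a\in\{0,1\}$, $$X+(-1)^{a}Y=\frac{1}{2^{L-1}}\sum_{\substack{\vec{b}\in\{0,1\}^{L}\\ \omega_{2}(\vec{b})=a}}\bigotimes_{l=1}^{L}\big[X_{l}+(-1)^{b_{l}}Y_{l}\big],$$ where $b_l$ is the $l$th entry of $\vec b$ and $\omega_2(\vec b)=\sum_{l=1}^{L}b_l \pmod 2$. *)

(* Defs.v *)
From HB Require Import structures.
From mathcomp Require Import all_boot all_order all_algebra.
Set Implicit Arguments. Unset Strict Implicit. Unset Printing Implicit Defensive.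
Import Order.TTheory GRing.Theory Num.Theory.
Local Open Scope ring_scope.

(* Multi-indices for the tensor product of L finite-dimensional spaces of
   dimensions d 0, ..., d (L-1): the computational basis of the tensor
   product space is indexed by tuples (i_0,...,i_{L-1}) with i_l < d l. *)
Definition mindex (L : nat) (d : 'I_L -> nat) :=
  {dffun forall l : 'I_L, 'I_(d l)}.

(* Tensor (Kronecker) product of operators X_0,...,X_{L-1}, X_l acting on
   the d l-dimensional space, given by its matrix entries in the product
   basis:  (X_0 ⊗ ... ⊗ X_{L-1})_{i,j} = prod_l (X_l)_{i_l, j_l}. *)
Definition tensor_op (R : comRingType) (L : nat) (d : 'I_L -> nat)
  (X : forall l : 'I_L, 'M[R]_(d l)) (i j : mindex d) : R :=
  \prod_(l < L) X l (i l) (j l).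

Definition omega2 (L : nat) (b : {ffun 'I_L -> bool}) : bool :=
  odd (\sum_(l < L) (b l : nat))%N.

(* Main.v *)
Require Import Defs.
From HB Require Import structures.
From mathcomp Require Import all_boot all_order all_algebra.
From mathcomp Require Import ring.
Import Order.TTheory GRing.Theory Num.Theory.
Local Open Scope ring_scope.

Theorem lemma4 (R : numFieldType) (L : nat) (hL : (0 < L)%N)
  (d : 'I_L -> nat) (X Y : forall l : 'I_L, 'M[R]_(d l)) (a : bool) :
  forall i j : mindex d,
    tensor_op X i j + (-1) ^+ a * tensor_op Y i j =
    ((2 ^ (L - 1))%:R)^-1 *
      \sum_(b : {ffun 'I_L -> bool} | omega2 b == a)
         tensor_op (fun l => X l + (-1) ^+ (b l) *: Y l) i j.
Proof.
move=> i j.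
have e2 : (2 : R) ^+ L = \prod_(l < L) 2 by rewrite prodr_const card_ord.
set x := fun l : 'I_L => X l (i l) (j l).
set y := fun l : 'I_L => Y l (i l) (j l).
pose F (l : 'I_L) (b : bool) := x l + (-1) ^+ b * y l.
pose P (f : {ffun 'I_L -> bool}) := \prod_(l < L) F l (f l).
have -> : \sum_(b : {ffun 'I_L -> bool} | omega2 b == a)
         tensor_op (fun l => X l + (-1) ^+ (b l) *: Y l) i j
        = \sum_(b : {ffun 'I_L -> bool} | omega2 b == a) P b.
  apply: eq_bigr => b _; rewrite /tensor_op /P; apply: eq_bigr => l _.
  by rewrite !mxE.
have HA : \sum_(f : {ffun 'I_L -> bool}) P f = 2 ^+ L * tensor_op X i j.
  rewrite /P -(bigA_distr_bigA F) /tensor_op e2 -big_split /=; apply: eq_bigr => l _.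
  rewrite big_bool /F /= expr0 expr1 mul1r mulN1r /x; ring.
have HB : \sum_(f : {ffun 'I_L -> bool}) (-1) ^+ omega2 f * P f
            = 2 ^+ L * tensor_op Y i j.
  pose G (l : 'I_L) (b : bool) := (-1) ^+ b * F l b.
  have -> : \sum_(f : {ffun 'I_L -> bool}) (-1) ^+ omega2 f * P f
            = \sum_(f : {ffun 'I_L -> bool}) \prod_(l < L) G l (f l).
    apply: eq_bigr => f _; rewrite /G /P big_split /=; congr (_ * _).
    by rewrite /omega2 signr_odd (big_morph _ (exprD _) (expr0 _)).
  rewrite -(bigA_distr_bigA G) /tensor_op e2 -big_split /=; apply: eq_bigr => l _.
  rewrite big_bool /G /F /= expr0 expr1 !mul1r !mulN1r /y; ring.
have HS : \sum_(f : {ffun 'I_L -> bool} | omega2 f == a) P f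
   = 2^-1 * (\sum_(f : {ffun 'I_L -> bool}) P f
       + (-1) ^+ a * \sum_(f : {ffun 'I_L -> bool}) (-1) ^+ omega2 f * P f).
  rewrite [\sum_(f : {ffun 'I_L -> bool}) P f](bigID (fun f => omega2 f == a)) /=.
  rewrite [\sum_(f : {ffun 'I_L -> bool}) (-1) ^+ omega2 f * P f](bigID (fun f => omega2 f == a)) /=.
  have -> : \sum_(f : {ffun 'I_L -> bool} | omega2 f == a) (-1) ^+ omega2 f * P f
    = (-1) ^+ a * \sum_(f : {ffun 'I_L -> bool} | omega2 f == a) P f.
    by rewrite mulr_sumr; apply: eq_bigr => f /eqP ->.
  have -> : \sum_(f : {ffun 'I_L -> bool} | omega2 f != a) (-1) ^+ omega2 f * P f
    = - ((-1) ^+ a * \sum_(f : {ffun 'I_L -> bool} | omega2 f != a) P f).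
    rewrite mulr_sumr -sumrN; apply: eq_bigr => f.
    by case: a; case: (omega2 f) => //= _; rewrite ?expr0 ?expr1 ?mulN1r ?mul1r ?opprK.
  have s2 : (-1) ^+ a * (-1) ^+ a = 1 :> R by rewrite -expr2 sqrr_sign.
  set A := \sum_(f | _ == a) P f; set B := \sum_(f | _ != a) P f.
  rewrite mulrBr !mulrA s2 !mul1r.
  have h2 : (2 : R) != 0 by rewrite pnatr_eq0.
  field; rewrite ?h2 //.
rewrite HS HA HB.
have hc : ((2 ^ (L - 1))%:R : R) != 0 by rewrite pnatr_eq0 expn_eq0.
have h2 : (2 : R) != 0 by rewrite pnatr_eq0.
have e : (2 : R) ^+ L = 2 * (2 ^ (L - 1))%:R.
  by rewrite natrX -exprS subn1 prednK.
rewrite e.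
field.
exact: hc.
Qed.
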